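(* In the triangle $T_2$, every individual entry appears at the head (column $0$) of infinitely many rows: for every positive integer $x$ and every $c\in\{0,\dots,x-1\}$, the entry located in row $x$, column $c$ of $T_2$ occupies column $0$ of row $y$ for infinitely many $y$.
   Context: For a positive integer $m$, the triangle $T_m$ is an array whose row $x$ ($x=1,2,\dots$) has $x$ entries, in columns $0,\dots,x-1$. Row $1$ is the single entry $1$. For $x>1$, row $x$ is obtained from row $x-1$ by rotating it cyclically left by $m$ positions (the entry in column $c$ of row $x-1$ moves to column $(c-m)\bmod(x-1)\in\{0,\dots,x-2\}$ of row $x$), then appending in column $x-1$ a new entry equal to $1$ plus the entry in column $0$ of row $x-1$. Entries are regarded as individual objects keeping their identity as they move from row to row. Here $m=2$. *)

(* Defs.v *)
From mathcomp Require Import all_boot.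
Set Implicit Arguments. Unset Strict Implicit. Unset Printing Implicit Defensive.

(* Entries are objects; we identify each entry by the row
   in which it was created (its "birth row"): row 1's single entry has
   identity 1, and the entry appended in column x-1 of row x has identity x.
   [Trow m x] is the list (indexed by columns 0..x-1) of the identities of
   the entries of row x.  Row x+1 is obtained from row x (which has x
   entries) by rotating it cyclically left by m positions (MathComp's
   [rot k s] = drop k s ++ take k s moves column c to column (c - k) mod
   size s; rotating by m equals rotating by m mod x), then appending the new
   entry (identity x+1).  Row 0 is a dummy (empty) row. *)
Fixpoint Trow (m x : nat) : seq nat :=
  match x with
  | 0 => [::]
  | 1 => [:: 1]
  | x'.+1 => rcons (rot (m %% x') (Trow m x')) x
  end.

Definition Tentry (m x c : nat) : nat := nth 0 (Trow m x) c.

(* Sanity checks (identities are unique, so equality of identities means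
   being the same entry). *)
Example Trow_2_5 : Trow 2 5 = [:: 2; 4; 3; 1; 5].
Proof. reflexivity. Qed.

(* Main.v *)
Require Import Defs.
From mathcomp Require Import all_boot.
From mathcomp Require Import zify.

Lemma Trow_S y : 0 < y -> Trow 2 y.+1 = rcons (rot (2 %% y) (Trow 2 y)) y.+1.
Proof. by case: y. Qed.

Lemma size_Trow y : size (Trow 2 y) = y.
Proof.
elim: y => [|y IH] //; case: y IH => [|y] IH //.
by rewrite Trow_S // size_rcons size_rot IH.
Qed.

Lemma nth_rot_k (s : seq nat) k i : k <= size s -> i < size s - k ->
  nth 0 (rot k s) i = nth 0 s (i + k).
Proof.
move=> hk hi; rewrite /rot nth_cat size_drop hi nth_drop; congr nth; lia.
Qed.

Lemma nth_rot_k2 (s : seq nat) k i : k <= size s -> size s - k <= i -> i < size s ->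
  nth 0 (rot k s) i = nth 0 s (i - (size s - k)).
Proof.
move=> hk hi hi2; rewrite /rot nth_cat size_drop ltnNge hi /= nth_take //; lia.
Qed.

Lemma step_small y q : 0 < y -> y <= 2 -> q < y -> Tentry 2 y q = Tentry 2 y.+1 q.
Proof.
move=> h0 h2 hq; rewrite /Tentry Trow_S // nth_rcons size_rot size_Trow hq.
have -> : 2 %% y = 0 by case: y h0 h2 {hq} => [|[|[|]]].
by rewrite rot0.
Qed.

Lemma step_ge2 y q : 3 <= y -> 2 <= q -> q < y -> Tentry 2 y q = Tentry 2 y.+1 (q - 2).
Proof.
move=> h3 h2 hq; rewrite /Tentry Trow_S; last lia.
rewrite nth_rcons size_rot size_Trow ifT; last lia.
have -> : 2 %% y = 2 by rewrite modn_small.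
rewrite nth_rot_k ?size_Trow; try lia. congr nth; lia.
Qed.

Lemma step_lt2 y q : 3 <= y -> q < 2 -> Tentry 2 y q = Tentry 2 y.+1 (q + y - 2).
Proof.
move=> h3 h2; rewrite /Tentry Trow_S; last lia.
rewrite nth_rcons size_rot size_Trow ifT; last lia.
have -> : 2 %% y = 2 by rewrite modn_small.
rewrite nth_rot_k2 ?size_Trow; try lia. congr nth; lia.
Qed.

Lemma descend k x : 2 * k < x -> forall r, r < 2 -> 2 * k + r < x ->
  Tentry 2 x (2 * k + r) = Tentry 2 (x + k) r.
Proof.
elim: k x => [|k IH] x hx r hr hxr; first by rewrite muln0 addn0.
rewrite step_ge2; try lia.
have -> : 2 * k.+1 + r - 2 = 2 * k + r by lia.
rewrite IH; try lia. congr Tentry; lia.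
Qed.

Lemma lemC k : forall m, odd m -> 3 <= 2 ^ k * m ->
  exists y, 2 ^ k * m <= y /\ Tentry 2 y 0 = Tentry 2 (2 ^ k * m) 1.
Proof.
elim: k => [|k IH] m hm hn.
- rewrite expn0 mul1n in hn *.
  rewrite step_lt2 //.
  have hev : 1 + m - 2 = 2 * (m./2) + 0.
    by have := odd_double_half m; rewrite hm -addnn; lia.
  rewrite hev descend; try lia.
  by eexists; split; last reflexivity; lia.
- set n := 2 ^ k.+1 * m in hn *.
  have hn2 : n = (2 ^ k * m).*2 by rewrite /n expnS -mulnA mul2n.
  rewrite step_lt2 //.
  have hev : 1 + n - 2 = 2 * ((2 ^ k * m).-1) + 1 by rewrite hn2; lia.
  rewrite hev descend; try lia.
  have -> : n.+1 + (2 ^ k * m).-1 = 2 ^ k * (3 * m) by rewrite hn2 mulnCA; lia.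
  have ho : odd (3 * m) by rewrite oddM hm.
  have h3 : 3 <= 2 ^ k * (3 * m) by rewrite hn2 in hn; lia.
  have [y [hy1 hy2]] := IH (3 * m) ho h3.
  exists y; split => //; lia.
Qed.

Lemma lemC' n : 3 <= n -> exists y, n <= y /\ Tentry 2 y 0 = Tentry 2 n 1.
Proof.
move=> hn. have hn0 : 0 < n by lia.
have [k [m [hm he]]] : exists k m, odd m /\ n = 2 ^ k * m.
  have [m hm he] := pfactor_coprime (isT : prime 2) hn0.
  by exists (logn 2 n), m; rewrite -coprime2n mulnC.
rewrite he in hn *; exact: lemC.
Qed.

Lemma lemB x c : 0 < x -> c < x -> exists y, x <= y /\ Tentry 2 y 0 = Tentry 2 x c.
Proof.
move=> hx hc.
have := odd_double_half c; set k := c./2 => hk.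
case: (boolP (odd c)) => ho; rewrite ?ho /= in hk.
- have -> : c = 2 * k + 1 by lia.
  rewrite descend; try lia.
  case: (leqP 3 (x + k)) => h3.
  + have [y [h1 h2]] := @lemC' _ h3. exists y; split => //; lia.
  + have hx2 : x + k = 2 by lia.
    rewrite hx2 step_small //.
    have [y [h1 h2]] := @lemC' 3 (leqnn _). exists y; split => //; lia.
- have -> : c = 2 * k + 0 by lia.
  rewrite descend; try lia.
  by exists (x + k); split => //; lia.
Qed.

Lemma lemA x c : 0 < x -> c < x -> exists y, x < y /\ Tentry 2 y 0 = Tentry 2 x c.
Proof.
move=> hx hc.
have [c' [hc' he]] : exists c', c' < x.+1 /\ Tentry 2 x c = Tentry 2 x.+1 c'.
  case: (leqP x 2) => h2; first by exists c; split; [lia | rewrite step_small].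
  case: (leqP 2 c) => h.
  + by exists (c - 2); split; [lia | rewrite step_ge2].
  + by exists (c + x - 2); split; [lia | rewrite step_lt2].
have [y [h1 h2]] := @lemB x.+1 c' (ltn0Sn _) hc'.
by exists y; split; [lia | rewrite h2 he].
Qed.

Theorem mainTheorem4 :
  forall x c : nat, 0 < x -> c < x ->
  forall N : nat, exists y : nat, N <= y /\ Tentry 2 y 0 = Tentry 2 x c.
Proof.
move=> x c hx hc N.
suff : exists y, N <= y /\ 0 < y /\ Tentry 2 y 0 = Tentry 2 x c.
  by case=> y [h1 [h2 h3]]; exists y.
elim: N => [|N [y [h1 [h2 h3]]]].
- have [y [h1 h2]] := @lemA x c hx hc. exists y; split => //; split => //; lia.
- have [z [h4 h5]] := @lemA y 0 h2 h2.
  exists z; split; first lia. split; first lia. by rewrite h5.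
Qed.
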